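(* Let $k$ be a perfect field of characteristic $p>0$, let $R$ be an $\mathbb N$-graded domain of finite type over $R_0=k$, and let $x\in R$ be a homogeneous element of positive degree. If $R[1/x]$ is finitely generated as a $D_R$-module, then $D_R$ has nonzero elements of negative degree.
   Context: $D_R=D_{R/k}$ is the ring of $k$-linear differential operators on $R$; since $k$ is perfect and $R$ is $F$-finite, $D_R=\bigcup_{e\ge 0}\operatorname{Hom}_{R^{p^e}}(R,R)$, where $R^{p^e}$ is the subring of $p^e$-th powers. $D_R$ is graded: $\delta$ has degree $a$ if $\delta(R_j)\subset R_{j+a}$ for all $j$. The $D_R$-module structure on $R[1/x]$ is given as follows: for $\delta\in\operatorname{Hom}_{R^{p^e}}(R,R)$, $r\in R$ and $n\le p^e$, $\delta(r/x^n)=\delta(rx^{p^e-n})/x^{p^e}$. *)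

(* Defs.v *)
From HB Require Import structures.
From mathcomp Require Import all_boot all_order all_algebra.
From mathcomp Require Import fraction.
Set Implicit Arguments. Unset Strict Implicit. Unset Printing Implicit Defensive.
Import Order.TTheory GRing.Theory Num.Theory.
Local Open Scope ring_scope.

Definition perfect_field (p : nat) (k : fieldType) : Prop :=
  forall a : k, exists b : k, b ^+ p = a.

(* R is of finite type over k: generated as a k-algebra by finitely many
   elements, i.e. every subset containing f(k) and the generators and closed
   under + and * is all of R. *)
Definition finite_type (k : fieldType) (R : idomainType)
    (f : {rmorphism k -> R}) : Prop :=
  exists (n : nat) (g : 'I_n -> R),
    forall S : R -> Prop,
      (forall c, S (f c)) -> (forall i, S (g i)) ->
      (forall a b, S a -> S b -> S (a + b)) ->
      (forall a b, S a -> S b -> S (a * b)) ->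
      forall r, S r.

(* An N-grading R = (+)_{j >= 0} R_j of the k-algebra R with R_0 = k.
   G j r  means  r \in R_j. *)
Definition Ngrading (k : fieldType) (R : idomainType)
    (f : {rmorphism k -> R}) (G : nat -> R -> Prop) : Prop :=
     (forall j, G j 0) /\
     (forall j a b, G j a -> G j b -> G j (a + b)) /\
     (forall j c a, G j a -> G j (f c * a)) /\
     (forall i j a b, G i a -> G j b -> G (i + j)%N (a * b)) /\
      (forall r, exists (n : nat) (a : nat -> R),
          (forall j, G j (a j)) /\ r = \sum_(j < n) a j) /\
      (forall (n : nat) (a : nat -> R), (forall j, G j (a j)) ->
          \sum_(j < n) a j = 0 -> forall j, (j < n)%N -> a j = 0) /\
     (forall r, G 0%N r <-> exists c, r = f c).

(* D_R = \bigcup_e Hom_{R^{p^e}}(R, R). *)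
Definition Hom_pe (p : nat) (R : idomainType) (e : nat) (d : R -> R) : Prop :=
  (forall a b, d (a + b) = d a + d b) /\
  (forall a r, d (a ^+ (p ^ e) * r) = a ^+ (p ^ e) * d r).

Definition in_DR (p : nat) (R : idomainType) (d : R -> R) : Prop :=
  exists e, Hom_pe p e d.

(* Homogeneous of degree a (a : int): d(R_j) \subset R_{j+a} for all j,
   where R_m = 0 for m < 0. *)
Definition Gz (R : idomainType) (G : nat -> R -> Prop) (m : int) (r : R) : Prop :=
  match m with
  | Posz n => G n r
  | Negz _ => r = 0
  end.

Definition op_has_degree (R : idomainType) (G : nat -> R -> Prop)
    (a : int) (d : R -> R) : Prop :=
  forall (j : nat) (r : R), G j r -> Gz G (j%:Z + a) (d r).

Definition DR_has_neg_degree (p : nat) (R : idomainType)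
    (G : nat -> R -> Prop) : Prop :=
  exists (d : R -> R) (a : int),
    [/\ in_DR p d, (exists r, d r != 0), a < 0 & op_has_degree G a d].

(* R[1/x], realized inside the fraction field of the domain R. *)
Definition in_loc (R : idomainType) (x : R) (u : {fraction R}) : Prop :=
  exists (r : R) (n : nat), u = tofrac r / tofrac (x ^+ n).

(* The D_R-module action on R[1/x]:  for d \in Hom_{R^{p^e}}(R,R), r \in R,
   n <= p^e,  d(r/x^n) = d(r x^{p^e-n}) / x^{p^e}.
   Dact d u v  means  d . u = v. *)
Definition Dact (p : nat) (R : idomainType) (x : R) (d : R -> R)
    (u v : {fraction R}) : Prop :=
  exists (e : nat) (r : R) (n : nat),
    [/\ Hom_pe p e d, (n <= p ^ e)%N,
        u = tofrac r / tofrac (x ^+ n)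
      & v = tofrac (d (r * x ^+ (p ^ e - n))) / tofrac (x ^+ (p ^ e))].

Definition loc_fg_over_DR (p : nat) (R : idomainType) (x : R) : Prop :=
  exists (t : nat) (g : 'I_t -> {fraction R}),
    (forall i, in_loc x (g i)) /\
    forall u, in_loc x u ->
      exists (d : 'I_t -> R -> R) (v : 'I_t -> {fraction R}),
        [/\ forall i, in_DR p (d i),
            forall i, Dact p x (d i) (g i) (v i)
          & u = \sum_(i < t) v i].

(* Main.v *)
Require Import Defs.
From HB Require Import structures.
From mathcomp Require Import all_boot all_order all_algebra.
From mathcomp Require Import fraction zify.
From Stdlib Require Import ClassicalEpsilon Classical.
Import Order.TTheory GRing.Theory Num.Theory.
Local Open Scope ring_scope.

Section Grad.
Variables (k : fieldType) (R : idomainType) (f : {rmorphism k -> R}) (G : nat -> R -> Prop).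
Hypothesis hG : Ngrading f G.

Lemma G0 j : G j 0. Proof. by case: hG. Qed.
Lemma GD j a b : G j a -> G j b -> G j (a + b).
Proof. by case: hG => _ [H] _; apply: H. Qed.
Lemma GZ j c a : G j a -> G j (f c * a).
Proof. by case: hG => _ [_ [H]] _; apply: H. Qed.
Lemma GM {i j a b} : G i a -> G j b -> G (i + j)%N (a * b).
Proof. by case: hG => _ [_ [_ [H]]] _; apply: H. Qed.
Lemma GS r : exists (n : nat) (a : nat -> R),
          (forall j, G j (a j)) /\ r = \sum_(j < n) a j.
Proof. by case: hG => _ [_ [_ [_ [H]]]] _; apply: H. Qed.
Lemma Gdir (n : nat) (a : nat -> R) : (forall j, G j (a j)) ->
          \sum_(j < n) a j = 0 -> forall j, (j < n)%N -> a j = 0.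
Proof. by case: hG => _ [_ [_ [_ [_ [H]]]]] _; apply: H. Qed.
Lemma G0k r : G 0%N r <-> exists c, r = f c.
Proof. by case: hG => _ [_ [_ [_ [_ [_ H]]]]]; apply: H. Qed.

Lemma GN j a : G j a -> G j (- a).
Proof. by move=> h; rewrite -mulN1r -(rmorphN1 f); apply: GZ. Qed.
Lemma G1 : G 0 1.
Proof. by apply/G0k; exists 1; rewrite rmorph1. Qed.
Lemma GX {j a} m : G j a -> G (j * m)%N (a ^+ m).
Proof.
move=> h; elim: m => [|m IH]; first by rewrite muln0 expr0; apply: G1.
by rewrite exprS mulnS; apply: GM.
Qed.

Lemma sum_ext n m (a : nat -> R) : (forall j, (n <= j)%N -> a j = 0) -> (n <= m)%N ->
  \sum_(j < m) a j = \sum_(j < n) a j.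
Proof.
move=> h nm; rewrite (big_ord_widen _ _ nm) [RHS]big_mkcond.
apply: eq_bigr => i _; case: ifP => // /negbT; rewrite -leqNgt => hi.
by rewrite h.
Qed.

Lemma sum_pick (N m0 : nat) (F : nat -> R) :
  \sum_(j < N) (if (j == m0 :> nat) then F j else 0) = if (m0 < N)%N then F m0 else 0.
Proof.
rewrite -big_mkcond /=; case: (ltnP m0 N) => h.
  by rewrite (big_pred1 (Ordinal h)) // => i; rewrite /= -val_eqE.
rewrite big_pred0 // => i; apply/negbTE; apply/eqP => E.
by move: (ltn_ord i); rewrite E ltnNge h.
Qed.

Lemma dec_ex r : exists na : nat * (nat -> R), (forall j, G j (na.2 j)) /\
   (forall j, (na.1 <= j)%N -> na.2 j = 0) /\ r = \sum_(j < na.1) na.2 j.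
Proof.
have [n [a [ha ->]]] := GS r.
exists (n, fun j => if (j < n)%N then a j else 0); split => /=.
  by move=> j; case: ifP => _; [apply: ha | apply: G0].
split; first by move=> j; rewrite ltnNge => ->.
by apply: eq_bigr => i _; rewrite ltn_ord.
Qed.

Definition dec r := proj1_sig (constructive_indefinite_description _ (dec_ex r)).
Definition Nr r := (dec r).1.
Definition pi j r := (dec r).2 j.

Lemma piG j r : G j (pi j r).
Proof. by rewrite /pi /dec; case: constructive_indefinite_description => /= na [h _]. Qed.
Lemma pi_big {j r} : (Nr r <= j)%N -> pi j r = 0.
Proof. by rewrite /pi /Nr /dec; case: constructive_indefinite_description => /= na [_ [h _]]; apply: h. Qed.
Lemma pi_dec r : r = \sum_(j < Nr r) pi j r.
Proof. by rewrite /pi /Nr /dec; case: constructive_indefinite_description => /= na [_ [_ h]]. Qed.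
Lemma pi_dec' r n : (Nr r <= n)%N -> r = \sum_(j < n) pi j r.
Proof. move=> h; rewrite (sum_ext (Nr r) n) //; first exact: pi_dec. by move=> j hj; apply: pi_big. Qed.

Lemma dir_uniq n (a b : nat -> R) : (forall j, G j (a j)) -> (forall j, G j (b j)) ->
  \sum_(j < n) a j = \sum_(j < n) b j -> forall j, (j < n)%N -> a j = b j.
Proof.
move=> ha hb E j jn; apply/eqP; rewrite -subr_eq0; apply/eqP.
apply: (@Gdir n (fun j => a j - b j)) => //.
  by move=> i; apply: GD => //; apply: GN.
by rewrite sumrB E subrr.
Qed.

Lemma pi_char r n (b : nat -> R) : (forall j, G j (b j)) -> r = \sum_(j < n) b j ->
  forall j, pi j r = if (j < n)%N then b j else 0.
Proof.
move=> hb E j.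
set m := maxn n (Nr r).
have E1 : r = \sum_(j < m) (if (j < n)%N then b j else 0).
  rewrite (sum_ext n m (fun j => if (j < n)%N then b j else 0)); last by rewrite leq_maxl.
    by rewrite E; apply: eq_bigr => i _; rewrite ltn_ord.
  by move=> i; rewrite ltnNge => ->.
have E2 := @pi_dec' r m (leq_maxr n (Nr r)).
case: (ltnP j m) => jm.
  apply: (@dir_uniq m (fun j => pi j r) (fun j => if (j < n)%N then b j else 0) _ _ _ j jm).
  - by move=> i; apply: piG.
  - by move=> i; case: ifP => _; [apply: hb | apply: G0].
  - by rewrite -E1 -E2.
rewrite pi_big; last by apply: leq_trans jm; apply: leq_maxr.
by rewrite ltnNge (leq_trans (leq_maxl _ _) jm).
Qed.

Lemma pi_hom {j h} : G j h -> forall i, pi i h = if i == j then h else 0.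
Proof.
move=> hh i; rewrite (@pi_char h j.+1 (fun i => if i == j then h else 0)).
- by case: eqP => [->|]; rewrite ?ltnSn //; case: ifP.
- by move=> l; case: eqP => [->|_] //; apply: G0.
- rewrite big_ord_recr /= eqxx big1 ?add0r // => l _.
  by rewrite ltn_eqF.
Qed.

Lemma pi0 j : pi j 0 = 0.
Proof. by rewrite (@pi_hom 0 0 (G0 0)); case: ifP. Qed.

Lemma piD j r s : pi j (r + s) = pi j r + pi j s.
Proof.
set n := maxn (Nr r) (Nr s).
rewrite (@pi_char (r + s) n (fun j => pi j r + pi j s)).
- case: ifP => // /negbT; rewrite -leqNgt => h.
  rewrite !pi_big ?addr0 //; apply: leq_trans h; [apply: leq_maxr | apply: leq_maxl].
- by move=> i; apply: GD; apply: piG.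
- by rewrite big_split /= -!pi_dec' // ?leq_maxl ?leq_maxr.
Qed.

Lemma pi_sum j I (s : seq I) (P : pred I) (F : I -> R) :
  pi j (\sum_(i <- s | P i) F i) = \sum_(i <- s | P i) pi j (F i).
Proof. by apply: (big_morph _ (piD j) (pi0 j)). Qed.

Lemma pi_mulhom {C H} t y : G C H ->
  pi t (H * y) = if (C <= t)%N then H * pi (t - C) y else 0.
Proof.
move=> hH; have -> : H * y = H * \sum_(j < Nr y) pi j y by rewrite -pi_dec.
rewrite mulr_sumr pi_sum.
under eq_bigr => m _ do rewrite (@pi_hom _ _ (@GM _ _ _ _ hH (piG m y))).
case: (leqP C t) => ct.
  have E m : (t == C + m)%N = (m == t - C)%N by apply/eqP/eqP; lia.
  under eq_bigr => m _ do rewrite E.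
  rewrite (sum_pick (Nr y) (t - C)%N (fun m => H * pi m y)).
  by case: ifP => // /negbT; rewrite -leqNgt => h; rewrite (@pi_big _ _ h) mulr0.
by rewrite big1 // => m _; case: eqP => //; lia.
Qed.

Definition piz (z : int) r := match z with Posz n => pi n r | Negz _ => 0 end.

Lemma piz0 z : piz z 0 = 0.
Proof. by case: z => //= n; apply: pi0. Qed.
Lemma pizD z r s : piz z (r + s) = piz z r + piz z s.
Proof. by case: z => /= [n|n]; rewrite ?addr0 ?piD. Qed.
Lemma pizG z r : Gz G z (piz z r).
Proof. by case: z => /= n; [apply: piG|]. Qed.

Lemma piz_mulhom C H z y : G C H -> piz (C%:Z + z) (H * y) = H * piz z y.
Proof.
move=> hH; case: z => [n|n].
  by rewrite -PoszD /= (@pi_mulhom _ _ _ y hH) leq_addr addKn.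
case: (ltnP n C) => h.
  have -> : (C%:Z + Negz n) = (C - n.+1)%N%:Z by rewrite NegzE; lia.
  by rewrite /= (@pi_mulhom _ _ _ y hH) /= mulr0; case: ifP => //; lia.
have -> : (C%:Z + Negz n) = Negz (n - C)%N by rewrite !NegzE; lia.
by rewrite /= mulr0.
Qed.


Variable p : nat.
Hypothesis pchR : p \in [pchar R].

Lemma frobD e (u v : R) : (u + v) ^+ (p ^ e) = u ^+ (p ^ e) + v ^+ (p ^ e).
Proof.
elim: e => [|e IH]; first by rewrite !expn0 !expr1.
rewrite expnSr !exprM IH -!(pFrobenius_autE pchR).
by apply: pFrobenius_autD_comm; apply: mulrC.
Qed.

Lemma frob0 e : (0 : R) ^+ (p ^ e) = 0.
Proof.
have p0 : (p == 0%N) = false by apply/negbTE; rewrite -lt0n prime_gt0 // (pcharf_prime pchR).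
by rewrite expr0n expn_eq0 p0.
Qed.

Lemma frob_sum e I (s : seq I) (P : pred I) (F : I -> R) :
  (\sum_(i <- s | P i) F i) ^+ (p ^ e) = \sum_(i <- s | P i) (F i) ^+ (p ^ e).
Proof. by apply: (big_morph (fun u => u ^+ (p ^ e)) (@frobD e) (frob0 e)). Qed.

Definition addf (d : R -> R) := forall u v, d (u + v) = d u + d v.

Lemma addf0 {d} : addf d -> d 0 = 0.
Proof. by move=> hd; apply: (@addrI _ (d 0)); rewrite -hd !addr0. Qed.

Lemma addf_sum {d I} {s : seq I} {P : pred I} {F : I -> R} : addf d ->
  d (\sum_(i <- s | P i) F i) = \sum_(i <- s | P i) d (F i).
Proof. by move=> hd; apply: big_morph => [u v|]; [apply: hd | apply: addf0]. Qed.

Definition comp (d : R -> R) (a : int) r :=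
  \sum_(j < Nr r) piz (j%:Z + a) (d (pi j r)).

Lemma comp_ext d a r n : addf d -> (Nr r <= n)%N ->
  comp d a r = \sum_(j < n) piz (j%:Z + a) (d (pi j r)).
Proof.
move=> hd hn; rewrite /comp (sum_ext (Nr r) n (fun j => piz (j%:Z + a) (d (pi j r)))) //.
by move=> j hj; rewrite (@pi_big _ _ hj) (addf0 hd) piz0.
Qed.

Lemma compD {d} a : addf d -> addf (comp d a).
Proof.
move=> hd r s; set n := maxn (Nr (r + s)) (maxn (Nr r) (Nr s)).
have h1 : (Nr (r + s) <= n)%N by rewrite leq_maxl.
have h2 : (Nr r <= n)%N by rewrite /n leq_max leq_maxl orbT.
have h3 : (Nr s <= n)%N by rewrite /n leq_max leq_maxr orbT.
rewrite !(@comp_ext d a _ n) // -big_split /=.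
by apply: eq_bigr => j _; rewrite piD hd pizD.
Qed.

Lemma comp_hom {d a l h} : addf d -> G l h -> comp d a h = piz (l%:Z + a) (d h).
Proof.
move=> hd hh; rewrite (@comp_ext d a h (maxn (Nr h) l.+1)) ?leq_maxl //.
under eq_bigr => j _ do rewrite (pi_hom hh).
rewrite (eq_bigr (fun j : 'I_(maxn (Nr h) l.+1) =>
   if (j == l :> nat) then piz (j%:Z + a) (d h) else 0)); last first.
  by move=> j _; case: eqP => _ //; rewrite (addf0 hd) piz0.
rewrite (sum_pick _ _ (fun j => piz (j%:Z + a) (d h))).
by rewrite leq_max ltnSn orbT.
Qed.

Lemma comp0 d a : addf d -> comp d a 0 = 0.
Proof. by move=> hd; rewrite (@comp_hom d a 0 0 hd (G0 0)) (addf0 hd) piz0. Qed.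

Lemma comp_deg {d} a : addf d -> op_has_degree G a (comp d a).
Proof. by move=> hd j r hr; rewrite (comp_hom hd hr); apply: pizG. Qed.

Lemma comp_Hom {d a e} : Hom_pe p e d -> Hom_pe p e (comp d a).
Proof.
case=> hd hm; have hc := compD a hd; split => // b r.
have step1 c l h s : G c h -> G l s -> comp d a (h ^+ (p ^ e) * s) = h ^+ (p ^ e) * comp d a s.
  move=> hh hs.
  have hq := GX (p ^ e) hh.
  rewrite (comp_hom hd (GM hq hs)) (comp_hom hd hs) hm.
  by rewrite PoszD -addrA piz_mulhom.
have step2 c h s : G c h -> comp d a (h ^+ (p ^ e) * s) = h ^+ (p ^ e) * comp d a s.
  move=> hh; rewrite [s]pi_dec mulr_sumr !(addf_sum hc) mulr_sumr.
  by apply: eq_bigr => l _; apply: (step1 c l) => //; apply: piG.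
rewrite [b]pi_dec frob_sum mulr_suml (addf_sum hc) mulr_suml.
by apply: eq_bigr => c _; apply: (step2 c); apply: piG.
Qed.

Definition Ge (L : nat) y := forall t, (t < L)%N -> pi t y = 0.

Lemma Ge0 y : Ge 0 y. Proof. by []. Qed.
Lemma Ge_mon L L' y : (L' <= L)%N -> Ge L y -> Ge L' y.
Proof. by move=> h hy t ht; apply: hy; apply: leq_trans h. Qed.
Lemma Ge_mul C H L y : G C H -> Ge L y -> Ge (C + L) (H * y).
Proof.
move=> hH hy t ht; rewrite (pi_mulhom _ _ hH); case: leqP => // ct.
by rewrite hy ?mulr0 //; lia.
Qed.
Lemma Ge_sum L I (s : seq I) (P : pred I) (F : I -> R) :
  (forall i, P i -> Ge L (F i)) -> Ge L (\sum_(i <- s | P i) F i).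
Proof. by move=> h t ht; rewrite pi_sum big1 // => i hi; apply: h. Qed.
Lemma Ge_hom D L y : G D y -> Ge L y -> (D < L)%N -> y = 0.
Proof. by move=> hy hL hD; rewrite -(hL D hD) (pi_hom hy) eqxx. Qed.

Hypothesis NoNeg : forall (d : R -> R) (a : int), in_DR p d -> a < 0 ->
  op_has_degree G a d -> forall r, d r = 0.

Lemma low_hom {d e l h} : Hom_pe p e d -> G l h -> forall t, (t < l)%N -> pi t (d h) = 0.
Proof.
move=> hd hh t tl.
have := @NoNeg (comp d (t%:Z - l%:Z)) (t%:Z - l%:Z).
move=> /(_ _ _ _ h) <-.
- by rewrite (comp_hom hd.1 hh) addrC subrK.
- by exists e; apply: comp_Hom.
- by rewrite subr_lt0 ltz_nat.
- by apply: comp_deg; case: hd.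
Qed.

Lemma Ge_d d e L y : Hom_pe p e d -> Ge L y -> Ge L (d y).
Proof.
move=> hd hy t tL; rewrite [y]pi_dec (addf_sum hd.1) pi_sum big1 // => j _.
case: (ltnP j L) => jL.
  by rewrite hy // (addf0 hd.1) pi0.
apply: (low_hom hd (piG j y)); exact: leq_trans tL jL.
Qed.

End Grad.


Lemma frac_aux (R : idomainType) (a b c : {fraction R}) : c != 0 -> a / c * (b * c) = a * b.
Proof. by move=> hc; rewrite [b * c]mulrC mulrA divfK. Qed.

Theorem proposition3p2 (p : nat) (k : fieldType) (R : idomainType)
    (f : {rmorphism k -> R}) (G : nat -> R -> Prop) (x : R) :
  p \in [pchar k] ->
  perfect_field p k ->
  finite_type f ->
  Ngrading f G ->
  x != 0 ->
  (exists d : nat, (0 < d)%N /\ G d x) ->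
  loc_fg_over_DR p x ->
  DR_has_neg_degree p G.
Proof.
move=> pk _ _ hG xn0 [δ [δp Gx]] [t [g [gloc gfg]]].
have pR : p \in [pchar R] := rmorph_pchar f pk.
apply: NNPP => NN.
have NoNeg : forall (d : R -> R) (a : int), in_DR p d -> a < 0 ->
    op_has_degree G a d -> forall r, d r = 0.
  move=> d a hd ha hdeg r; apply: NNPP => hr; apply: NN; exists d, a; split => //.
  by exists r; apply/eqP.
have GeD := @Ge_d _ _ _ _ hG p pR NoNeg.
have GeM := @Ge_mul _ _ _ _ hG p pR.
have xN0 m : tofrac (x ^+ m) != 0 by rewrite tofrac_eq0 expf_neq0.
have : forall i, exists rn : R * nat, g i = tofrac rn.1 / tofrac (x ^+ rn.2).
  by move=> i; have [r [n E]] := gloc i; exists (r, n).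
case/fin_all_exists => rn hrn.
set M := (\max_(i < t) (rn i).2)%N.
have hM i : ((rn i).2 <= M)%N.
  rewrite /M. exact: (@leq_bigmax _ (fun j => (rn j).2) i).
have [dd [v [hdd hact husum]]] :=
  gfg (tofrac 1 / tofrac (x ^+ M.+1)) (ex_intro _ 1 (ex_intro _ M.+1 erefl)).
have : forall i, exists ern : nat * R * nat,
   [/\ Hom_pe p ern.1.1 (dd i), (ern.2 <= p ^ ern.1.1)%N,
       g i = tofrac ern.1.2 / tofrac (x ^+ ern.2)
     & v i = tofrac (dd i (ern.1.2 * x ^+ (p ^ ern.1.1 - ern.2))) / tofrac (x ^+ (p ^ ern.1.1))].
  by move=> i; have [e [r [n H]]] := hact i; exists (e, r, n).
case/fin_all_exists => ern hern.
set q := fun i => (p ^ (ern i).1.1)%N.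
set w := fun i => dd i ((ern i).1.2 * x ^+ (q i - (ern i).2)).
set N := (M.+1 + \sum_(i < t) q i)%N.
have hqN i : (q i <= N)%N by rewrite /N (bigD1 i) //=; lia.
have hMN : (M.+1 <= N)%N by rewrite /N leq_addr.
have EQ : x ^+ (N - M.+1) = \sum_(i < t) w i * x ^+ (N - q i).
  apply/eqP; rewrite -tofrac_eq; apply/eqP.
  have := congr1 (fun z => z * tofrac (x ^+ N)) husum => /=.
  have -> : x ^+ N = x ^+ (N - M.+1) * x ^+ M.+1 by rewrite -exprD subnK.
  rewrite tofracM tofrac1 frac_aux // mul1r => ->.
  rewrite -tofracM -exprD subnK // mulr_suml (big_morph _ (@tofracD R) (tofrac0 R)); apply: eq_bigr => i _.
  have [_ _ _ ->] := hern i.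
  have -> : x ^+ N = x ^+ (N - q i) * x ^+ q i by rewrite -exprD subnK.
  by rewrite tofracM frac_aux // tofracM.
have GeR : Ge k R f G hG (δ * (N - M)) (\sum_(i < t) w i * x ^+ (N - q i)).
  apply: Ge_sum => i _.
  have [hHom hnq hg _] := hern i.
  case: (leqP (rn i).2 (q i)) => hn.
    have Es : (ern i).1.2 * x ^+ (q i - (ern i).2) = (rn i).1 * x ^+ (q i - (rn i).2).
      have : tofrac (ern i).1.2 / tofrac (x ^+ (ern i).2)
           = tofrac (rn i).1 / tofrac (x ^+ (rn i).2) by rewrite -hg -hrn.
      move/eqP; rewrite eqr_div // -!tofracM tofrac_eq => /eqP E.
      apply: (mulIf (expf_neq0 (rn i).2 xn0)).
      by rewrite mulrAC E -!mulrA -!exprD subnKC // subnK.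
    have Gs : Ge k R f G hG (δ * (q i - (rn i).2)) (w i).
      apply: (GeD _ _ _ _ hHom); rewrite Es mulrC.
      have := GeM _ _ 0 (rn i).1 (@GX _ _ _ _ hG _ _ (q i - (rn i).2) Gx) (Ge0 _ _ _ _ _ _).
      by rewrite addn0.
    rewrite mulrC; apply: (@Ge_mon _ _ _ _ hG _ _ _ _ (GeM _ _ _ _ (@GX _ _ _ _ hG _ _ (N - q i) Gx) Gs)).
    rewrite -mulnDr leq_mul2l; apply/orP; right; have := hM i; have := hqN i; lia.
  rewrite mulrC; apply: (@Ge_mon _ _ _ _ hG _ _ _ _ (GeM _ _ _ _ (@GX _ _ _ _ hG _ _ (N - q i) Gx) (Ge0 _ _ _ _ _ (w i)))).
  rewrite addn0 leq_mul2l; apply/orP; right; have := hM i; have := hqN i; lia.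
rewrite -EQ in GeR.
have := @Ge_hom _ _ _ _ hG _ _ _ (@GX _ _ _ _ hG _ _ (N - M.+1) Gx) GeR.
have hlt : (δ * (N - M.+1) < δ * (N - M))%N by rewrite ltn_mul2l δp /=; lia.
move=> /(_ hlt) /eqP; rewrite (negbTE (expf_neq0 _ xn0)) //.
Qed.
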